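(* Suppose $(b,s) = 1$, $r | b^{\infty}$ (all prime factors of $r$ divide $b$), and $a_m$ is an arbitrary finite sequence of complex numbers. Then \begin{equation*} \sum_{\substack{x \bmod b \\ (x,b)=1}} \Big|\sum_{m \geq 1} a_m S(0, m;s) S(rx,m;br)\Big|^2 \leq br^2 s \sum_{\substack{x \bmod bs \\ (x,bs)=1}} \Big|\sum_{m \equiv 0 \bmod r} a_m e\Big(\frac{x m/r}{bs}\Big)\Big|^2, \end{equation*} where $S(a,b;c)$ denotes the classical Kloosterman sum and $e(x)=e^{2\pi i x}$. *)

(* Defs.v *)
From HB Require Import structures.
From mathcomp Require Import all_boot all_order all_algebra.
From mathcomp Require Import all_classical all_reals.
From mathcomp Require Import trigo.
From mathcomp Require Import complex.
Set Implicit Arguments. Unset Strict Implicit. Unset Printing Implicit Defensive.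
Import Order.TTheory GRing.Theory Num.Theory.
Local Open Scope ring_scope.
Local Open Scope complex_scope.

Definition ee (R : realType) (t : R) : R[i] :=
  (cos (2 * pi * t))%:C + 'i * (sin (2 * pi * t))%:C.

(* an inverse of x modulo c (the unique y < c with x*y = 1 mod c when
   coprime x c; 0 otherwise) *)
Definition invmod (c x : nat) : nat :=
  if [pick y : 'I_c | (x * y %% c == 1 %% c)%N] is Some y then nat_of_ord y else 0%N.

Definition kloosterman (R : realType) (a m c : nat) : R[i] :=
  \sum_(x < c | coprime x c)
     ee ((a * x + m * invmod c x)%:R / c%:R : R).

(* Main.v *)
Require Import Defs.
From HB Require Import structures.
From mathcomp Require Import all_boot all_order all_algebra.
From mathcomp Require Import all_classical all_reals.
From mathcomp Require Import trigo.
From mathcomp Require Import complex.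
From mathcomp Require Import ring lra.
Import Order.TTheory GRing.Theory Num.Theory.
Local Open Scope ring_scope.
Local Open Scope complex_scope.

From mathcomp Require Import zify.
Set Implicit Arguments. Unset Strict Implicit.
Lemma cs_real (R' : numDomainType) n (y : 'I_n -> R') : (forall i, 0 <= y i) ->
  (\sum_(i < n) y i) ^+ 2 <= n%:R * \sum_(i < n) y i ^+ 2.
Proof.
move=> y0.
have h : 0 <= \sum_(i < n) \sum_(j < n) (y i - y j) ^+ 2.
  apply: sumr_ge0 => i _; apply: sumr_ge0 => j _.
  by rewrite -realEsqr realB ?ger0_real.
have e : \sum_(i < n) \sum_(j < n) (y i - y j) ^+ 2 =
   (n%:R * \sum_(i < n) y i ^+ 2 - (\sum_(i < n) y i) ^+ 2) *+ 2.
  under eq_bigr => i _ do under eq_bigr => j _ do rewrite sqrrB.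
  under eq_bigr => i _ do rewrite big_split /= sumrB sumr_const card_ord ?sumrMnl.
  rewrite big_split /= sumrB sumr_const card_ord ?sumrMnl.
  have -> : \sum_(i < n) \sum_(j < n) (y i * y j) = (\sum_(i < n) y i) ^+ 2.
    rewrite expr2 mulr_suml; apply: eq_bigr => i _.
    by rewrite mulr_sumr.
  rewrite -mulr_natl; ring.
move: h; rewrite e pmulrn_lge0 // subr_ge0 //.
Qed.

Lemma cs_norm (C : numDomainType) n (f : 'I_n -> C) :
  `|\sum_(i < n) f i| ^+ 2 <= n%:R * \sum_(i < n) `|f i| ^+ 2.
Proof.
apply: le_trans (@cs_real _ _ (fun i => `|f i|) (fun i => normr_ge0 (f i))).
apply: lerXn2r; last exact: ler_norm_sum.
  by rewrite qualifE /= normr_ge0.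
by rewrite qualifE /=; apply: sumr_ge0 => i _; exact: normr_ge0.
Qed.

Local Open Scope nat_scope.
Lemma inv_ex c x : 0 < c -> coprime x c -> exists y : 'I_c, x * y %% c == 1 %% c.
Proof.
move=> c0 cx; case: (posnP x) => [x0|xp].
  move: cx; rewrite x0 /coprime gcd0n => /eqP c1.
  by exists (Ordinal c0) => /=; rewrite mul0n c1 !modn1.
case: (egcdnP c xp) => km kn hk _.
exists (Ordinal (ltn_pmod km c0)) => /=.
rewrite modnMmr mulnC hk (eqP cx) -modnDml modnMl add0n //.
Qed.

Lemma invmod_uniq c x z : 0 < c -> z < c -> x * z %% c = 1 %% c -> invmod c x = z.
Proof.
move=> c0 zc hz; rewrite /invmod; case: pickP => [y /eqP hy|hn]; last first.
  by move: (hn (Ordinal zc)) => /=; rewrite hz eqxx.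
have : z %% c = y %% c.
  have -> : z %% c = (z * (x * y)) %% c by rewrite -modnMmr hy modnMmr muln1.
  have -> : z * (x * y) = y * (x * z) by lia.
  by rewrite -modnMmr hz modnMmr muln1.
by rewrite !modn_small.
Qed.

Lemma invmodP c x : 0 < c -> coprime x c -> invmod c x < c /\ x * invmod c x %% c = 1 %% c.
Proof.
move=> c0 cx; have [y hy] := inv_ex c0 cx.
by rewrite (invmod_uniq c0 (ltn_ord y) (eqP hy)); split; [exact: ltn_ord | exact/eqP].
Qed.

Lemma invmod_coprime c x : 0 < c -> coprime x c -> coprime (invmod c x) c.
Proof.
move=> c0 cx; have [_ h] := invmodP c0 cx.
case: (ltnP 1 c) => c1; last first.
  have -> : c = 1 by lia.
  exact: coprimen1.
move: h; rewrite (modn_small c1) => h.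
case: (posnP (invmod c x)) => [i0|ip].
  by move: h; rewrite i0 muln0 mod0n.
by apply: modn_coprime ip _; exists x; rewrite mulnC.
Qed.

Lemma invmodK c x : 0 < c -> coprime x c -> x < c -> invmod c (invmod c x) = x.
Proof.
move=> c0 cx xc; apply: invmod_uniq => //.
by rewrite mulnC; case: (invmodP c0 cx).
Qed.

Lemma sum_inv (V : nmodType) c (F : nat -> V) : 0 < c ->
  (\sum_(x < c | coprime x c) F x = \sum_(x < c | coprime x c) F (invmod c x))%R.
Proof.
move=> c0.
pose sg (x : 'I_c) : 'I_c := if coprime x c then Ordinal (ltn_pmod (invmod c x) c0) else x.
have sgv : forall x, nat_of_ord (sg x) = if coprime x c then invmod c x else x.
  move=> x; rewrite /sg; case: ifP => hx //=.
  by rewrite modn_small //; case: (invmodP c0 hx).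
have sgP : forall x, coprime (sg x) c = coprime x c.
  move=> x; rewrite sgv; case: ifP => hx //; exact: invmod_coprime.
have sgK : involutive sg.
  move=> x; apply: val_inj => /=; rewrite sgv sgP sgv.
  by case hx: (coprime x c) => //; rewrite invmodK.
rewrite big_mkcond (reindex_inj (inv_inj sgK)) /= [RHS]big_mkcond.
apply: eq_bigr => x _; rewrite sgP sgv; by case: (coprime x c).
Qed.
Lemma cop_rad b r z : 0 < r -> (forall p, prime p -> p %| r -> p %| b) ->
  coprime z b -> coprime z r.
Proof.
move=> r0 hrb czb; apply/negPn/negP => ncr.
have g1 : 1 < gcdn z r.
  have : 0 < gcdn z r by rewrite gcdn_gt0 r0 orbT.
  by move: ncr; rewrite /coprime; lia.
have pp := pdiv_prime g1.
have pd := pdiv_dvd (gcdn z r).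
have pz : pdiv (gcdn z r) %| z := dvdn_trans pd (dvdn_gcdl _ _).
have pr : pdiv (gcdn z r) %| r := dvdn_trans pd (dvdn_gcdr _ _).
have pb := hrb _ pp pr.
have : pdiv (gcdn z r) %| gcdn z b by rewrite dvdn_gcd pz pb.
by rewrite (eqP czb) dvdn1 => /eqP h; move: pp; rewrite h.
Qed.

Lemma cop_split b r z : 0 < r -> (forall p, prime p -> p %| r -> p %| b) ->
  coprime z (b * r) = coprime z b.
Proof.
move=> r0 hrb; rewrite coprimeMr; case h: (coprime z b) => //=.
exact: cop_rad h.
Qed.

Lemma cop_shift b z t : coprime (z + b * t) b = coprime z b.
Proof. by rewrite -coprime_modl addnC mulnC modnMDl coprime_modl. Qed.

Lemma mod_cancel d k m n : 0 < d -> coprime k d -> k * m %% d = k * n %% d -> m %% d = n %% d.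
Proof.
move=> d0 ckd h.
have [y hy] : exists y, k * y %% d = 1 %% d.
  case: (posnP k) => [k0|kp].
    move: ckd; rewrite k0 /coprime gcd0n => /eqP ->; by exists 0; rewrite !modn1.
  case: (egcdnP d kp) => km kn hk _; exists km.
  by rewrite mulnC hk (eqP ckd) -modnDml modnMl add0n.
have e : forall u, u %% d = (k * u * y) %% d.
  by move=> u; rewrite mulnAC -modnMml hy modnMml mul1n.
by rewrite e -modnMml h modnMml -e.
Qed.

Local Close Scope nat_scope.
Lemma sum_split (V : nmodType) b r (F : nat -> V) :
  \sum_(z < b * r) F z = \sum_(z0 < b) \sum_(t < r) F (z0 + b * t)%N.
Proof.
rewrite -(big_mkord xpredT F).
elim: r => [|r IH].
  by rewrite muln0 big_geq // big1 // => z _; rewrite big_ord0.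
rewrite mulnS addnC (big_cat_nat _ (leq_addr _ _)) //= IH.
rewrite -{1}[(b * r)%N]add0n big_addn addKn big_mkord -big_split /=.
apply: eq_bigr => z _; rewrite big_ord_recr /=; congr (_ + F _).
Qed.


Lemma sum_split_cop (V : nmodType) b r (G : nat -> V) : (0 < r)%N ->
  (forall p, prime p -> (p %| r)%N -> (p %| b)%N) ->
  \sum_(z < b * r | coprime z (b * r)) G z =
  \sum_(z0 < b | coprime z0 b) \sum_(t < r) G (z0 + b * t)%N.
Proof.
move=> r0 hrb; rewrite big_mkcond (sum_split b r (fun z => if coprime z (b * r) then G z else 0)) [RHS]big_mkcond.
apply: eq_bigr => z0 _.
under eq_bigr => t _ do rewrite cop_split // cop_shift.
by case: (coprime z0 b) => //; rewrite big1.
Qed.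

Lemma inv_red b r z : (0 < b)%N -> (0 < r)%N -> coprime z (b * r) ->
  (invmod (b * r) z %% b = invmod b (z %% b))%N.
Proof.
move=> b0 r0 cz; symmetry; apply: invmod_uniq => //; first exact: ltn_pmod.
have br0 : (0 < b * r)%N by rewrite muln_gt0 b0.
have [_ h] := invmodP br0 cz.
rewrite modnMml modnMmr -(modn_dvdm _ (dvdn_mulr r (dvdnn b))) h.
by rewrite (modn_dvdm _ (dvdn_mulr r (dvdnn b))).
Qed.

Section EE.
Variable R : realType.
Local Notation C := R[i].

Lemma eeE (t : R) : ee t = Complex (cos (2 * pi * t)) (sin (2 * pi * t)).
Proof. by rewrite /ee; simpc. Qed.

Lemma ee_add (x y : R) : ee (x + y) = ee x * ee y.
Proof.
rewrite !eeE mulrDr cosD sinD; simpc. by congr Complex; ring.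
Qed.

Lemma ee_nat (n : nat) : ee (n%:R : R) = 1.
Proof.
rewrite eeE.
have -> : 2 * pi * n%:R = 0 + (pi *+ 2) *+ n :> R by rewrite add0r -mulr_natr; ring.
by rewrite (periodicn (@cosD2pi R)) (periodicn (@sinD2pi R)) cos0 sin0.
Qed.

Lemma ee_conj (t : R) : (ee t)^* * ee t = 1.
Proof. rewrite eeE; simpc. by rewrite -!expr2 cos2Dsin2 mulrC subrr. Qed.

Lemma ee_neq1 (t : R) : 0 < t < 1 -> ee t != 1.
Proof.
move=> /andP[t0 t1]; rewrite eeE; apply/negP => /eqP [] hc _.
have : 0 < sin (pi * t) by apply: sin_gt0_pi; rewrite mulr_gt0 ?pi_gt0 //= gtr_pMr ?pi_gt0.
have e : 2 * pi * t = pi * t + pi * t by ring.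
move: hc; rewrite e cosD => hc => hsin.
have hs : sin (pi * t) ^+ 2 = 0.
  have := cos2Dsin2 (pi * t). rewrite !expr2. lra.
by move: hs => /eqP; rewrite sqrf_eq0 => /eqP h; rewrite h ltxx in hsin.
Qed.

Definition E (c n : nat) : C := ee (n%:R / c%:R : R).

Lemma E_add c a b : E c (a + b) = E c a * E c b.
Proof. by rewrite /E natrD mulrDl ee_add. Qed.

Lemma E_0 c : E c 0 = 1.
Proof. by rewrite /E mul0r (ee_nat 0). Qed.

Lemma E_per c n k : (0 < c)%N -> E c (n + c * k) = E c n.
Proof.
move=> c0; rewrite E_add [E c (c * k)]/E natrM mulrAC mulfV ?mul1r ?pnatr_eq0 -?lt0n //.
by rewrite ee_nat mulr1.
Qed.

Lemma E_mod c n : (0 < c)%N -> E c n = E c (n %% c).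
Proof. by move=> c0; rewrite {1}(divn_eq n c) mulnC addnC E_per. Qed.

Lemma E_scale c d n : (0 < c)%N -> (0 < d)%N -> E (c * d) (n * d) = E c n.
Proof.
move=> c0 d0; rewrite /E !natrM; congr ee.
by rewrite invfM mulrACA mulfV ?mulr1 // pnatr_eq0 -lt0n.
Qed.

Lemma E_exp c k t : E c (k * t) = E c k ^+ t.
Proof.
elim: t => [|t IH]; first by rewrite muln0 E_0 expr0.
by rewrite mulnSr E_add IH exprSr.
Qed.

Lemma E_neq1 c k : (0 < c)%N -> ~~ (c %| k)%N -> E c k != 1.
Proof.
move=> c0 nd; rewrite E_mod //; apply: ee_neq1.
have h1 : (0 < k %% c)%N by rewrite lt0n; exact: nd.
have h2 : (k %% c < c)%N by rewrite ltn_pmod.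
have cR : (0 : R) < c%:R by rewrite ltr0n.
rewrite divr_gt0 ?ltr0n //= ltr_pdivrMr // mul1r ltr_nat //.
Qed.

Lemma E_orth c k : (0 < c)%N ->
  \sum_(t < c) E c (k * t) = if (c %| k)%N then c%:R else 0.
Proof.
move=> c0; case: ifP => hd.
  have [q ->] := dvdnP hd.
  rewrite (eq_bigr (fun _ => 1)); last first.
    move=> t _; rewrite mulnAC mulnC -[(c * _)%N]add0n E_per // E_0 //.
  by rewrite sumr_const card_ord.
under eq_bigr => t _ do rewrite E_exp.
have hz : E c k != 1 by apply: E_neq1 => //; rewrite hd.
have : (E c k - 1) * \sum_(t < c) E c k ^+ t = 0.
  by rewrite -subrX1 -E_exp mulnC -[(_ * _)%N]add0n E_per // E_0 subrr.
by move/eqP; rewrite mulf_eq0 subr_eq0 (negbTE hz) /= => /eqP.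
Qed.

Lemma E_conj c n : (0 < c)%N -> (E c n)^* = E c (n * c.-1).
Proof.
move=> c0.
have h : E c n * E c (n * c.-1) = 1.
  by rewrite -E_add -{1}[n]muln1 -mulnDr add1n prednK // mulnC -[(_ * _)%N]add0n E_per // E_0.
by rewrite -[_^*]mulr1 -h mulrA /E ee_conj mul1r.
Qed.
Lemma conjE (x : C) : Num.conj x = conjc x.
Proof. by []. Qed.

Lemma normK (x : C) : `|x| ^+ 2 = x * conjc x.
Proof. by rewrite normCK. Qed.

Lemma conjcM (x y : C) : conjc (x * y) = conjc x * conjc y.
Proof. by case: x => a b; case: y => c d; simpc; congr Complex; ring. Qed.

Lemma dvd_diff b u u' : (0 < b)%N -> (u < b)%N -> (u' < b)%N ->
  (b %| u + u' * b.-1)%N = (u == u').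
Proof.
move=> b0 ub ub'.
have e : (u + u' * b.-1 + u' = u' * b + u)%N.
  by rewrite -addnA -{2}[u']muln1 -mulnDr addn1 prednK // addnC.
have -> : (b %| u + u' * b.-1)%N = (u + u' * b.-1 == 0 %[mod b])%N by rewrite mod0n.
rewrite -(eqn_modDr u') e modnMDl add0n !modn_small //.
Qed.

Lemma parseval b (f : nat -> C) : (0 < b)%N ->
  \sum_(x < b) `|\sum_(u < b) f u * E b (x * u)| ^+ 2 = b%:R * \sum_(u < b) `|f u| ^+ 2.
Proof.
move=> b0.
have t : forall x u u' : nat, (f u * E b (x * u)) * Num.conj (f u' * E b (x * u')) =
   (f u * Num.conj (f u')) * E b ((u + u' * b.-1) * x).
  move=> x u u'; rewrite conjE conjcM E_conj // mulrACA -E_add; congr (_ * E b _).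
  by lia.
under eq_bigr => x _ do rewrite normCK rmorph_sum mulr_suml.
under eq_bigr => x _ do under eq_bigr => u _ do rewrite mulr_sumr.
under eq_bigr => x _ do under eq_bigr => u _ do under eq_bigr => u' _ do rewrite t.
rewrite exchange_big /=.
under eq_bigr => u _ do rewrite exchange_big /=.
under eq_bigr => u _ do under eq_bigr => u' _ do rewrite -mulr_sumr E_orth //.
rewrite mulr_sumr; apply: eq_bigr => u _.
rewrite (bigD1 u) //= big1 ?addr0.
  by rewrite (dvd_diff b0 (ltn_ord u) (ltn_ord u)) eqxx normCK mulrC.
move=> u' hu; rewrite (dvd_diff b0 (ltn_ord u) (ltn_ord u')).
have -> : (nat_of_ord u == nat_of_ord u') = false by rewrite eq_sym; exact: negbTE hu.
by rewrite mulr0.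
Qed.

Lemma kl0 m s : kloosterman R 0 m s = \sum_(v < s | coprime v s) E s (m * invmod s v).
Proof. by rewrite /kloosterman; apply: eq_bigr => v _; rewrite mul0n add0n. Qed.

Lemma kl_red b r x m : (0 < b)%N -> (0 < r)%N ->
  (forall p, prime p -> (p %| r)%N -> (p %| b)%N) ->
  kloosterman R (r * x) m (b * r) = (if (r %| m)%N then r%:R else 0) *
    \sum_(z < b | coprime z b) E b (x * invmod b z) * E (b * r) (m * z).
Proof.
move=> b0 r0 hrb.
have br0 : (0 < b * r)%N by rewrite muln_gt0 b0.
rewrite /kloosterman (sum_inv (fun y => E (b * r) (r * x * y + m * invmod (b * r) y))) //.
have step : forall z : 'I_(b * r), coprime z (b * r) ->
   E (b * r) (r * x * invmod (b * r) z + m * invmod (b * r) (invmod (b * r) z)) =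
   E b (x * invmod b (z %% b)) * E (b * r) (m * z).
  move=> z cz; rewrite invmodK // E_add; congr (_ * _).
  have -> : (r * x * invmod (b * r) z = x * invmod (b * r) z * r)%N by lia.
  by rewrite E_scale // E_mod // -modnMmr inv_red // -E_mod.
rewrite (eq_bigr _ step).
rewrite (sum_split_cop (fun z => E b (x * invmod b (z %% b)) * E (b * r) (m * z))) // mulr_sumr; apply: eq_bigr => z0 cz0.
under eq_bigr => t _ do rewrite (addnC z0) (mulnC b t) modnMDl modn_small // mulnDr E_add mulrA.
under eq_bigr => t _ do rewrite mulrAC.
rewrite -mulr_sumr mulrC; congr (_ * _).
rewrite -(E_orth m r0); apply: eq_bigr => t _.
by rewrite mulnA (mulnC b r) E_scale.
Qed.

Definition Aw b s r N (a : nat -> C) w :=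
  \sum_(1 <= m < N.+1 | (r %| m)%N) a m * E (b * s) (w * (m %/ r)).
Definition wf b s r z v := (z * s + invmod s v * (b * r))%N.

Lemma term_pt b s r x m (a : nat -> C) : (0 < b)%N -> (0 < s)%N -> (0 < r)%N ->
  (forall p, prime p -> (p %| r)%N -> (p %| b)%N) ->
  a m * kloosterman R 0 m s * kloosterman R (r * x) m (b * r) =
  if (r %| m)%N then r%:R * \sum_(z < b | coprime z b) \sum_(v < s | coprime v s)
     E b (x * invmod b z) * (a m * E (b * s) (wf b s r z v * (m %/ r)))
  else 0.
Proof.
move=> b0 s0 r0 hrb; rewrite kl0 kl_red //.
case: ifP => hd; last by rewrite !mul0r mulr0.
have [q hq] := dvdnP hd; rewrite hq mulnK //.
set S1 := \sum_(v < s | _) _; set S2 := \sum_(z < b | _) (E b _ * E _ _).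
have -> : a (q * r)%N * S1 * (r%:R * S2) = r%:R * (S2 * (a (q * r)%N * S1)) by ring.
congr (_ * _); rewrite mulr_suml; apply: eq_bigr => z cz.
rewrite mulr_sumr mulr_sumr; apply: eq_bigr => v cv.
rewrite /wf mulnDl E_add.
have -> : E (b * r) (q * r * z) = E (b * s) (z * s * q).
  have -> : (q * r * z = q * z * r)%N by lia.
  rewrite E_scale // -(E_scale (q * z) b0 s0).
  by congr (E _ _); lia.
have -> : E s (q * r * invmod s v) = E (b * s) (invmod s v * (b * r) * q).
  rewrite -(E_scale (q * r * invmod s v) s0 b0) mulnC.
  by congr (E _ _); lia.
ring.
Qed.

Lemma term_id b s r N x (a : nat -> C) : (0 < b)%N -> (0 < s)%N -> (0 < r)%N ->
  (forall p, prime p -> (p %| r)%N -> (p %| b)%N) ->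
  \sum_(1 <= m < N.+1) a m * kloosterman R 0 m s * kloosterman R (r * x) m (b * r) =
  r%:R * \sum_(z < b | coprime z b) (E b (x * invmod b z) *
     \sum_(v < s | coprime v s) Aw b s r N a (wf b s r z v)).
Proof.
move=> b0 s0 r0 hrb.
under eq_bigr => m _ do rewrite term_pt //.
rewrite -big_mkcond /= -mulr_sumr; congr (_ * _).
rewrite exchange_big /=; apply: eq_bigr => z cz.
rewrite exchange_big /= mulr_sumr; apply: eq_bigr => v cv.
by rewrite /Aw mulr_sumr.
Qed.

Lemma wf_modb b s r z v : (wf b s r z v %% b = (s * z) %% b)%N.
Proof.
have -> : (wf b s r z v = invmod s v * r * b + s * z)%N by rewrite /wf (mulnC z s) addnC (mulnC b r) mulnA.
by rewrite modnMDl.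
Qed.

Lemma wf_mods b s r z v : (wf b s r z v %% s = (b * r * invmod s v) %% s)%N.
Proof. by rewrite /wf modnMDl mulnC. Qed.

Lemma wf_cop b s r z v : (0 < s)%N -> (0 < r)%N -> coprime b s ->
  (forall p, prime p -> (p %| r)%N -> (p %| b)%N) ->
  coprime z b -> coprime v s -> coprime (wf b s r z v) (b * s).
Proof.
move=> s0 r0 hbs hrb cz cv.
have crs : coprime r s by rewrite coprime_sym; apply: (cop_rad r0 hrb); rewrite coprime_sym.
rewrite coprimeMr -coprime_modl wf_modb coprime_modl coprimeMl cz coprime_sym hbs /=.
rewrite -coprime_modl wf_mods coprime_modl !coprimeMl hbs crs /=.
exact: invmod_coprime.
Qed.

Lemma wf_inj b s r z1 v1 z2 v2 : (0 < b)%N -> (0 < s)%N -> (0 < r)%N -> coprime b s ->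
  (forall p, prime p -> (p %| r)%N -> (p %| b)%N) ->
  (z1 < b)%N -> (z2 < b)%N -> (v1 < s)%N -> (v2 < s)%N ->
  coprime v1 s -> coprime v2 s ->
  (wf b s r z1 v1 %% (b * s) = wf b s r z2 v2 %% (b * s))%N -> z1 = z2 /\ v1 = v2.
Proof.
move=> b0 s0 r0 hbs hrb z1b z2b v1s v2s cv1 cv2 h.
have crs : coprime r s by rewrite coprime_sym; apply: (cop_rad r0 hrb); rewrite coprime_sym.
split.
  have hb : (wf b s r z1 v1 %% b = wf b s r z2 v2 %% b)%N.
    by rewrite -[LHS](modn_dvdm _ (dvdn_mulr s (dvdnn b))) -[RHS](modn_dvdm _ (dvdn_mulr s (dvdnn b))) h.
  rewrite !wf_modb in hb.
  have := mod_cancel b0 _ hb; rewrite !modn_small //; apply.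
  by rewrite coprime_sym.
have hs : (wf b s r z1 v1 %% s = wf b s r z2 v2 %% s)%N.
  by rewrite -[LHS](modn_dvdm _ (dvdn_mull b (dvdnn s))) -[RHS](modn_dvdm _ (dvdn_mull b (dvdnn s))) h.
rewrite !wf_mods in hs.
have i1 := (invmodP s0 cv1).1; have i2 := (invmodP s0 cv2).1.
have hc : coprime (b * r) s by rewrite coprimeMl hbs crs.
have hi : invmod s v1 = invmod s v2.
  by have := mod_cancel s0 hc hs; rewrite !modn_small.
by rewrite -(invmodK s0 cv1 v1s) hi invmodK.
Qed.

Lemma le_of_eq (x y : C) : x = y -> x <= y. Proof. by move->. Qed.

Lemma le_sub (I : finType) (P : pred I) (f : I -> C) : (forall i, 0 <= f i) ->
  \sum_(i | P i) f i <= \sum_i f i.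
Proof.
move=> f0; rewrite [X in _ <= X](bigID P) /= lerDl.
by apply: sumr_ge0 => i _.
Qed.

Lemma step1 b (B : nat -> C) : (0 < b)%N ->
  \sum_(x < b | coprime x b) `|\sum_(z < b | coprime z b) E b (x * invmod b z) * B z| ^+ 2
  <= b%:R * \sum_(z < b | coprime z b) `|B z| ^+ 2.
Proof.
move=> b0.
pose c (u : nat) := if coprime u b then B (invmod b u) else 0.
have e : forall x : nat, \sum_(z < b | coprime z b) E b (x * invmod b z) * B z =
    \sum_(u < b) c u * E b (x * u).
  move=> x; rewrite (sum_inv (fun z => E b (x * invmod b z) * B z)) // big_mkcond.
  apply: eq_bigr => u _; rewrite /c; case: ifP => cu //; last by rewrite mul0r.
  by rewrite invmodK // mulrC.
under eq_bigr => x _ do rewrite e.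
apply: le_trans (le_sub _ _) _; first by move=> i; rewrite exprn_ge0 ?normr_ge0.
rewrite parseval //; apply: ler_wpM2l; first by rewrite ler0n.
rewrite (sum_inv (fun z => `|B z| ^+ 2)) // [X in _ <= X]big_mkcond.
by apply: le_of_eq; apply: eq_bigr => u _; rewrite /c; case: ifP => //; rewrite normr0 expr0n.
Qed.

Lemma step2 s (F : nat -> C) :
  `|\sum_(v < s | coprime v s) F v| ^+ 2 <= s%:R * \sum_(v < s | coprime v s) `|F v| ^+ 2.
Proof.
rewrite big_mkcond; apply: le_trans (cs_norm _) _.
rewrite [X in _ <= _ * X]big_mkcond; apply: le_of_eq; congr (_ * _).
by apply: eq_bigr => v _; case: ifP => //; rewrite normr0 expr0n.
Qed.

Lemma Aw_mod b s r N a w : (0 < b * s)%N -> Aw b s r N a w = Aw b s r N a (w %% (b * s)).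
Proof.
move=> bs0; rewrite /Aw; apply: eq_bigr => m _.
by rewrite E_mod // [in RHS]E_mod // modnMml.
Qed.

Lemma step3 b s r N (a : nat -> C) : (0 < b)%N -> (0 < s)%N -> (0 < r)%N -> coprime b s ->
  (forall p, prime p -> (p %| r)%N -> (p %| b)%N) ->
  \sum_(z < b | coprime z b) \sum_(v < s | coprime v s) `|Aw b s r N a (wf b s r z v)| ^+ 2
  <= \sum_(x < b * s | coprime x (b * s)) `|Aw b s r N a x| ^+ 2.
Proof.
move=> b0 s0 r0 hbs hrb.
have bs0 : (0 < b * s)%N by rewrite muln_gt0 b0.
pose h (p : 'I_b * 'I_s) : 'I_(b * s) := Ordinal (ltn_pmod (wf b s r p.1 p.2) bs0).
pose A := [set p : 'I_b * 'I_s | coprime p.1 b && coprime p.2 s].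
pose g (x : 'I_(b * s)) := `|Aw b s r N a x| ^+ 2.
rewrite pair_big_dep /=.
rewrite (eq_bigr (fun p => g (h p))); last first.
  by move=> p _; rewrite /g /h /= -Aw_mod.
rewrite (eq_bigl (fun p => p \in A)); last by move=> p; rewrite inE.
rewrite -big_imset; last first.
  move=> [z1 v1] [z2 v2]; rewrite !inE /= => /andP[cz1 cv1] /andP[cz2 cv2] hh.
  have hw := congr1 val hh; simpl in hw.
  have [e1 e2] := wf_inj b0 s0 r0 hbs hrb (ltn_ord z1) (ltn_ord z2) (ltn_ord v1) (ltn_ord v2) cv1 cv2 hw.
  by congr pair; apply: val_inj.
rewrite big_mkcond [X in _ <= X]big_mkcond /=; apply: ler_sum => x _.
case: ifP => hx; last by case: ifP => _ //; rewrite /g exprn_ge0 ?normr_ge0.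
move: hx => /imsetP [[z v]]; rewrite inE /= => /andP[cz cv] ->.
by rewrite /h /= coprime_modl wf_cop.
Qed.
End EE.

Theorem lemma11p4 (R : realType) (b s r N : nat) (a : nat -> R[i])
  (hb : (0 < b)%N) (hs : (0 < s)%N) (hr : (0 < r)%N)
  (hbs : coprime b s)
  (hrb : forall p : nat, prime p -> (p %| r)%N -> (p %| b)%N) :
  \sum_(x < b | coprime x b)
     `| \sum_(1 <= m < N.+1)
          a m * kloosterman R 0 m s * kloosterman R (r * x) m (b * r) | ^+ 2
  <= (b * r ^ 2 * s)%N%:R *
     \sum_(x < b * s | coprime x (b * s))
       `| \sum_(1 <= m < N.+1 | (r %| m)%N)
            a m * ee ((x * (m %/ r))%N%:R / (b * s)%N%:R : R) | ^+ 2.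
Proof.
under eq_bigr => x _ do rewrite term_id // normrM exprMn normr_nat.
rewrite -mulr_sumr.
pose B z := \sum_(v < s | coprime v s) Aw b s r N a (wf b s r z v).
have h1 := step1 B hb.
have h2 : \sum_(z < b | coprime z b) `|B z| ^+ 2 <= s%:R *
    \sum_(z < b | coprime z b) \sum_(v < s | coprime v s) `|Aw b s r N a (wf b s r z v)| ^+ 2.
  by rewrite mulr_sumr; apply: ler_sum => z _; exact: (step2 s (fun v => Aw b s r N a (wf b s r z v))).
have h3 := step3 N a hb hs hr hbs hrb.
have -> : (b * r ^ 2 * s)%N%:R = (r%:R : R[i]) ^+ 2 * (b%:R * s%:R).
  rewrite !natrM ?natrX ?natrM; ring.
rewrite -!mulrA; do 2 (apply: ler_wpM2l; first by rewrite ler0n).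
apply: le_trans h1 _; apply: ler_wpM2l; first by rewrite ler0n.
apply: le_trans h2 _; apply: ler_wpM2l; first by rewrite ler0n.
exact: h3.
Qed.
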